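(* For integers $N\ge 1$ and $n\ge 1$, $$B_{N,n}=(-1)^n\,n!\,\det\big(c_{ij}\big)_{1\le i,j\le n},$$ where $c_{ij}=\dfrac{N!}{(N+i-j+1)!}$ if $j\le i$, $c_{ij}=1$ if $j=i+1$, and $c_{ij}=0$ if $j>i+1$. That is, the matrix has $\frac{N!}{(N+1)!}$ on the diagonal, $1$ on the superdiagonal, zeros above the superdiagonal, and $\frac{N!}{(N+k+1)!}$ on the $k$-th subdiagonal.
   Context: For a positive integer $N$, the hypergeometric Bernoulli numbers $B_{N,n}$ ($n\ge 0$) are defined by $$\frac{x^N/N!}{e^x-\sum_{n=0}^{N-1}x^n/n!}=\sum_{n=0}^\infty B_{N,n}\frac{x^n}{n!}.$$ *)

(* Defs.v *)
(* Formal power series over a field of characteristic 0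
   (here: any numFieldType R) are represented by their coefficient sequences
   nat -> R, multiplied by the Cauchy product. *)
From HB Require Import structures.
From mathcomp Require Import all_boot all_order all_algebra.
Set Implicit Arguments. Unset Strict Implicit. Unset Printing Implicit Defensive.
Import Order.TTheory GRing.Theory Num.Theory.
Local Open Scope ring_scope.

Definition fps_mul {R : numFieldType} (a b : nat -> R) (m : nat) : R :=
  \sum_(i < m.+1) a i * b (m - i)%N.

Definition hb_num {R : numFieldType} (N : nat) (k : nat) : R :=
  if k == N then (N`!%:R)^-1 else 0.

(* Coefficients of e^x - sum_{n=0}^{N-1} x^n/n! *)
Definition hb_den {R : numFieldType} (N : nat) (k : nat) : R :=
  (k`!%:R)^-1 - (if (k < N)%N then (k`!%:R)^-1 else 0).

(* B is the sequence of hypergeometric Bernoulli numbers B_{N,n}: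
   the identity of formal power series
     (x^N/N!) / (e^x - sum_{n<N} x^n/n!) = sum_n B n x^n/n!,
   i.e. (since the denominator divides the numerator in the ring of formal
   power series, and the quotient is unique)
     x^N/N! = (e^x - sum_{n<N} x^n/n!) * sum_n B n x^n/n!. *)
Definition is_hyperBernoulli {R : numFieldType} (N : nat) (B : nat -> R) : Prop :=
  forall m : nat, hb_num N m = fps_mul (hb_den N) (fun n => B n / (n`!%:R)) m.

(* The n x n matrix (c_ij), with 0-based indices i j : 'I_n
   (the entries only depend on i - j, so the shift is harmless). *)
Definition hb_matrix {R : numFieldType} (N n : nat) : 'M[R]_n :=
  \matrix_(i < n, j < n)
    if (j <= i)%N then N`!%:R / (N + i - j + 1)`!%:R
    else if j == i.+1 :> nat then 1 else 0.

(* Main.v *)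
Require Import Defs.
From HB Require Import structures.
From mathcomp Require Import all_boot all_order all_algebra.
From mathcomp Require Import zify ring.
Import Order.TTheory GRing.Theory Num.Theory.
Local Open Scope ring_scope.

Section S.
Variables (R : numFieldType) (N : nat) (B : nat -> R).
Hypothesis HB : is_hyperBernoulli N B.
Let a (k : nat) : R := N`!%:R / (N + k)`!%:R.
Let b (k : nat) : R := B k / k`!%:R.

Lemma fact_neq0 k : (k`!%:R : R) != 0.
Proof. by rewrite pnatr_eq0 -lt0n fact_gt0. Qed.

Lemma conv k : \sum_(t < k.+1) b (k - t) * a t = (k == 0%N)%:R.
Proof.
have := HB (N + k)%N.
rewrite /hb_num /fps_mul (_ : \sum_(i < _) _ = \sum_(0 <= i < (N+k).+1) hb_den N i * b (N+k-i)); last by rewrite big_mkord.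
rewrite (big_cat_nat _ (n := N)) //=; last by lia.
rewrite big1_seq ?add0r; last first.
  move=> i /andP[_]; rewrite mem_index_iota => /andP[_ hi]; rewrite /hb_den hi subrr mul0r //.
have E := big_addn 0 (N+k).+1 N xpredT (fun i => hb_den N i * b (N+k-i)); rewrite add0n in E; rewrite E.
have -> : ((N + k).+1 - N = k.+1)%N by lia.
under eq_bigr => i _ do rewrite /hb_den ltnNge leq_addl /= subr0.
move=> H.
transitivity (N`!%:R * \sum_(0 <= i < k.+1) ((i + N)`!%:R)^-1 * b (N + k - (i + N))).
  rewrite big_mkord mulr_sumr; apply: eq_bigr => i _.
  rewrite (_ : (N + k - (i + N) = k - i)%N); last by lia.
  rewrite /a /b (addnC i N). ring.
rewrite -H.
case: (eqVneq k 0%N) => [->|hk].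
  by rewrite addn0 eqxx divff // fact_neq0.
rewrite ifN ?mulr0 ?(negbTE hk) //; lia.
Qed.

Variable n : nat.
Let T : 'M[R]_n.+1 := \matrix_(i, j) if (j <= i)%N then a (i - j) else 0.
Let Bi : 'M[R]_n.+1 := \matrix_(i, j) if (j <= i)%N then b (i - j) else 0.

Lemma BiT : Bi *m T = 1%:M.
Proof.
apply/matrixP => i j; rewrite !mxE.
pose F l := (if (l <= i)%N then b (i - l) else 0) * (if (j <= l)%N then a (l - j) else 0).
have -> : \sum_(l < n.+1) Bi i l * T l j = \sum_(0 <= l < n.+1) F l.
  by rewrite big_mkord; apply: eq_bigr => l _; rewrite !mxE.
case: (leqP j i) => hji; last first.
  have -> : (i == j) = false.
    by apply/negbTE; apply/eqP => e; move: hji; rewrite e ltnn.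
  rewrite big1 //.
  move=> l _; rewrite /F; case: (leqP l i) => hl; last by rewrite mul0r.
  by rewrite ifN ?mulr0 //; lia.
rewrite (big_cat_nat _ (n := j)); [|by []|by have := ltn_ord i; lia]; rewrite /=.
rewrite (big_cat_nat _ (n := i.+1) (m := j)); [|by lia|by have := ltn_ord i; lia]; rewrite /=.
rewrite big1_seq ?add0r; last first.
  move=> l /andP[_]; rewrite mem_index_iota => /andP[_ hl].
  by rewrite /F (_ : (j <= l)%N = false) ?mulr0 //; apply/negbTE; rewrite -ltnNge.
rewrite [X in _ + X]big1_seq ?addr0; last first.
  move=> l /andP[_]; rewrite mem_index_iota => /andP[hl _].
  by rewrite /F (_ : (l <= i)%N = false) ?mul0r //; apply/negbTE; rewrite -ltnNge.
have E := big_addn 0 i.+1 j xpredT F; rewrite add0n in E; rewrite E.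
have -> : (i.+1 - j = (i - j).+1)%N by lia.
rewrite big_mkord.
have -> : (i == j) = ((i - j)%N == 0%N).
  by rewrite -val_eqE /= eqn_leq hji andbT subn_eq0.
rewrite -(conv (i - j)); apply: eq_bigr => t _; rewrite /F.
rewrite ifT; last by have := ltn_ord t; lia.
rewrite ifT ?leq_addl // addnK.
by rewrite (_ : (i - (t + j) = i - j - t)%N) //; lia.
Qed.

Lemma detT : \det T = 1.
Proof.
rewrite det_trig; last first.
  by apply/is_trig_mxP => i j hij; rewrite mxE ifN // -ltnNge.
rewrite big1 // => i _; rewrite mxE leqnn subnn /a addn0 divff //; exact: fact_neq0.
Qed.

Lemma Bi_adj : Bi = \adj T.
Proof.
have h : T *m \adj T = 1%:M by rewrite mul_mx_adj detT.
by rewrite -[Bi]mulmx1 -h mulmxA BiT mul1mx.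
Qed.

Lemma minorE : row' ord0 (col' ord_max T) = hb_matrix N n.
Proof.
apply/matrixP => i j; rewrite !mxE /=.
case: i => i hi; case: j => j hj0 /=.
have hj : (n <= j)%N = false by apply/negbTE; rewrite -ltnNge.
rewrite /bump hj /= add0n add1n.
case: (leqP j i) => hji.
  rewrite ifT; last by lia.
  rewrite /a (_ : (N + (i.+1 - j) = N + i - j + 1)%N) //; lia.
case: (eqVneq j i.+1) => e.
  by rewrite e leqnn subnn /a addn0 divff //; exact: fact_neq0.
rewrite ifN //; apply/negP => hle; move/eqP: e; lia.
Qed.
Lemma bn : b n = (-1) ^+ n * \det (hb_matrix N n).
Proof.
have := congr1 (fun M : 'M[R]_n.+1 => M ord_max ord0) Bi_adj.
rewrite /= !mxE /cofactor minorE add0n subn0 leq0n /b => ->.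
by [].
Qed.
End S.

Theorem theorem1 (R : numFieldType) (N n : nat) (B : nat -> R) :
  (1 <= N)%N -> (1 <= n)%N -> is_hyperBernoulli N B ->
  B n = (-1) ^+ n * n`!%:R * \det (@hb_matrix R N n).
Proof.
move=> _ _ HB.
have h := @bn R N B HB n.
rewrite -(divfK (fact_neq0 R n) (B n)) h.
ring.
Qed.
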